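(* Let $0<\delta<1/\mathrm{e}$ and $\beta>0$, and let $k,m,w$ be positive integers with $m\le w$ and $k\ge m\ge \frac{2\mathrm{e}}{(1-\mathrm{e}\delta)^2}\left(1+\left(\beta+\tfrac12\right)\ln k\right)$. If $m$ balls are thrown independently and uniformly at random into $w$ bins, then the probability that the number of bins containing exactly one ball is less than $\delta m$ is at most $k^{-\beta}$. *)

(* Defs.v *)
From mathcomp Require Import all_boot.
From Stdlib Require Import Reals.
Set Implicit Arguments. Unset Strict Implicit. Unset Printing Implicit Defensive.

Definition outcome (m w : nat) := {ffun 'I_m -> 'I_w}.

Definition singletons (m w : nat) (f : outcome m w) : nat :=
  #|[set j : 'I_w | #|[set i : 'I_m | f i == j]| == 1%N]|.

Definition few_singletons (m w : nat) (delta : R) (f : outcome m w) : bool :=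
  if Rlt_dec (INR (singletons f)) (delta * INR m)%R then true else false.

(* Probability under the uniform distribution on all w^m outcomes
   (balls thrown independently and uniformly). *)
Definition prob_few_singletons (m w : nat) (delta : R) : R :=
  (INR #|[set f : outcome m w | few_singletons delta f]| /
   INR #|[set: outcome m w]|)%R.

(* Main.v *)
Require Import Defs.
From Stdlib Require Import Reals Lra Lia Psatz.
From Coquelicot Require Coquelicot.
From mathcomp Require all_boot all_order all_algebra Rstruct ring lra.

Module An.
Import Coquelicot.Coquelicot.
Open Scope R_scope.


Lemma exp_partial t d : 0 <= t ->
  sum_f_R0 (fun i => / INR (Factorial.fact i) * t ^ i) d <= exp t.
Proof.
intros Ht. apply growing_ineq.
- red; intros n. change (sum_f_R0 ?f (S n)) with (sum_f_R0 f n + f (S n)). cbv beta. assert (0 <= / INR (Factorial.fact (S n)) * t ^ S n).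
  { apply Rmult_le_pos. left; apply Rinv_0_lt_compat, INR_fact_lt_0. apply pow_le; lra. }
  lra.
- exact (proj2_sig (exist_exp t)).
Qed.

Lemma mono_deriv f df a b : a <= b ->
  (forall x, a <= x <= b -> is_derive f x (df x)) ->
  (forall x, a <= x <= b -> 0 <= df x) -> f a <= f b.
Proof.
intros Hab Hd Hpos.
destruct (MVT_gen f a b df) as [c [Hc Heq]].
- intros x Hx. apply Hd. rewrite Rmin_left in Hx by lra. rewrite Rmax_right in Hx by lra. lra.
- intros x Hx. rewrite Rmin_left in Hx by lra. rewrite Rmax_right in Hx by lra.
  apply derivable_continuous_pt. exists (df x). apply is_derive_Reals. apply Hd; lra.
- rewrite Rmin_left in Hc by lra. rewrite Rmax_right in Hc by lra.
  assert (0 <= df c * (b - a)) by (apply Rmult_le_pos; [apply Hpos; lra| lra]). lra.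
Qed.

Lemma sinh_ge s : 0 <= s -> 2 * s <= exp s - exp (- s).
Proof.
intros Hs.
assert (H := mono_deriv (fun x => exp x - exp (- x) - 2 * x)
  (fun x => exp x + exp (- x) - 2) 0 s Hs).
simpl in H. rewrite Ropp_0, exp_0 in H.
assert (0 <= exp s - exp (- s) - 2 * s); [|lra].
replace 0 with (1 - 1 - 2 * 0) at 1 by ring. apply H.
- intros x _. auto_derive; auto. ring.
- intros x _. assert (exp x * exp (- x) = 1) by (rewrite <- exp_plus; replace (x + - x) with 0 by ring; apply exp_0).
  assert (0 < exp x) by apply exp_pos. assert (0 < exp (-x)) by apply exp_pos.
  assert (0 <= exp (-x) * (exp x - 1)^2) by (apply Rmult_le_pos; [lra| apply pow2_ge_0]). nra.
Qed.

Lemma h_ge y : 0 <= y -> (1 - y) * exp y <= (1 + y) * exp (- y).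
Proof.
intros Hy.
assert (H := mono_deriv (fun x => (1 + x) * exp (- x) - (1 - x) * exp x)
  (fun x => x * (exp x - exp (- x))) 0 y Hy).
simpl in H. rewrite Ropp_0, exp_0 in H.
assert (0 <= (1 + y) * exp (- y) - (1 - y) * exp y); [|lra].
replace 0 with ((1 + 0) * 1 - (1 - 0) * 1) at 1 by ring. apply H.
- intros x _. auto_derive; auto. ring.
- intros x Hx. apply Rmult_le_pos; [lra|]. assert (H2 := sinh_ge x). lra.
Qed.

Lemma exp_pow x n : exp x ^ n = exp (INR n * x).
Proof.
induction n as [|n IH].
- simpl. rewrite Rmult_0_l, exp_0. reflexivity.
- rewrite <- tech_pow_Rmult, IH, S_INR, <- exp_plus. f_equal. ring.
Qed.

Lemma stir_step m : (1 <= m)%nat ->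
  exp 2 * INR m ^ (2 * m + 1) <= INR (S m) ^ (2 * m + 1).
Proof.
intros Hm. assert (HM : 1 <= INR m) by (apply (le_INR 1); exact Hm).
rewrite S_INR.
set (y := / (2 * INR m + 1)).
assert (Hy : 0 < y) by (unfold y; apply Rinv_0_lt_compat; lra).
assert (Hyy : y * (2 * INR m + 1) = 1) by (unfold y; field; lra).
assert (H := h_ge y (Rlt_le _ _ Hy)).
assert (E : exp y * exp y = exp (2 * y)) by (rewrite <- exp_plus; f_equal; ring).
assert (Hk : exp (2 * y) * INR m <= INR m + 1).
{ rewrite <- E. assert (Hp : exp y * exp (- y) = 1) by (rewrite <- exp_plus; replace (y + - y) with 0 by ring; apply exp_0).
  assert (0 < exp y) by apply exp_pos. assert (0 < exp (-y)) by apply exp_pos.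
  (* (1-y) e^y <= (1+y) e^-y ; multiply by e^y: (1-y)e^{2y} <= 1+y *)
  assert (H2 : (1 - y) * (exp y * exp y) <= 1 + y).
  { replace (1 + y) with ((1 + y) * exp (- y) * exp y) by (rewrite Rmult_assoc, (Rmult_comm (exp (-y))), Hp; ring).
    replace ((1 - y) * (exp y * exp y)) with ((1 - y) * exp y * exp y) by ring.
    apply Rmult_le_compat_r; lra. }
  assert (E1 : 1 - y = 2 * INR m * y) by lra.
  assert (E2 : 1 + y = 2 * (INR m + 1) * y) by lra.
  rewrite E1, E2 in H2. nra. }
replace (exp 2) with (exp (2 * y) ^ (2 * m + 1)).
- rewrite <- Rpow_mult_distr. apply pow_incr. split.
  + apply Rmult_le_pos; [left; apply exp_pos| lra].
  + exact Hk.
- rewrite exp_pow. f_equal. rewrite plus_INR, mult_INR. simpl. replace (1 + 1) with 2 by ring. nra.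
Qed.

Lemma stirling m : (1 <= m)%nat ->
  (INR (Factorial.fact m) * exp (INR m)) ^ 2 <= exp 1 ^ 2 * INR m * INR m ^ (2 * m).
Proof.
induction m as [|m IH]; intros Hm; [lia|].
destruct (Nat.eq_dec m 0) as [->|Hm0].
- simpl. lra.
- assert (IH' := IH ltac:(lia)).
  assert (HM : 1 <= INR m) by (apply (le_INR 1); lia).
  assert (St := stir_step m ltac:(lia)).
  rewrite fact_simpl, mult_INR.
  rewrite S_INR at 2. rewrite exp_plus.
  replace (INR (S m) * INR (Factorial.fact m) * (exp (INR m) * exp 1)) with
     (INR (S m) * exp 1 * (INR (Factorial.fact m) * exp (INR m))) by ring.
  set (a := INR (Factorial.fact m) * exp (INR m)) in *.
  set (M := INR m) in *. set (e := exp 1) in *.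
  replace (2 * S m)%nat with (2 * m + 1 + 1)%nat by lia.
  replace (M ^ (2 * m + 1)) with (M * M ^ (2 * m)) in St by (rewrite pow_add; simpl; ring).
  rewrite !pow_add. rewrite S_INR in *.
  assert (0 <= e ^ 2) by (apply pow2_ge_0).
  assert (0 <= (M + 1) ^ 2) by (apply pow2_ge_0).
  replace (exp 2) with (e ^ 2) in St by (unfold e; rewrite exp_pow; simpl; f_equal; ring).
  assert (H1 : ((M + 1) * e * a) ^ 2 <= (M + 1) ^ 2 * e ^ 2 * (e ^ 2 * M * M ^ (2 * m)))
    by (replace (((M + 1) * e * a) ^ 2) with ((M + 1) ^ 2 * e ^ 2 * a ^ 2) by ring;
        apply Rmult_le_compat_l; [apply Rmult_le_pos; assumption| exact IH']).
  assert (H2 : (M + 1) ^ 2 * e ^ 2 * (e ^ 2 * M * M ^ (2 * m)) <= (M + 1) ^ 2 * e ^ 2 * (M + 1) ^ (2 * m + 1))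
    by (apply Rmult_le_compat_l; [apply Rmult_le_pos; assumption| rewrite Rmult_assoc; exact St]).
  eapply Rle_trans; [exact H1|]. eapply Rle_trans; [exact H2|].
  right. rewrite !pow_add. unfold M. ring.
Qed.


Lemma exp_le x y : x <= y -> exp x <= exp y.
Proof. intros [H|H]; [left; apply exp_increasing; exact H| right; rewrite H; reflexivity]. Qed.

Lemma final (delta beta : R) (k m w : nat) (Nc : R)
  (hd0 : 0 < delta) (hd1 : delta < / exp 1) (hb : 0 < beta)
  (hm : (1 <= m)%nat) (hmw : (m <= w)%nat) (hmk : (m <= k)%nat)
  (hlow : 2 * exp 1 / (1 - exp 1 * delta) ^ 2
             * (1 + (beta + / 2) * ln (INR k)) <= INR m)
  (Nc0 : 0 <= Nc)
  (hcount : forall z t q, 0 <= z -> z <= 1 -> 0 <= t ->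
     (forall n : nat, INR n < delta * INR m -> q <= z ^ n) ->
     Nc * q * t ^ m <= INR (Factorial.fact m) * (exp t - (1 - z) * t) ^ w) :
  Nc / INR w ^ m <= Rpower (INR k) (- beta).
Proof.
set (M := INR m) in *. set (Wr := INR w) in *. set (K := INR k) in *. set (e := exp 1) in *.
assert (HM : 1 <= M) by (apply (le_INR 1); exact hm).
assert (HMW : M <= Wr) by (apply le_INR; exact hmw).
assert (HMK : M <= K) by (apply le_INR; exact hmk).
assert (He : 2 < e) by (unfold e; assert (H := exp_ineq1 1); lra).
assert (He0 : 0 < e) by lra.
assert (Hde : e * delta < 1).
{ apply Rmult_lt_compat_l with (r := e) in hd1; [|lra]. rewrite Rinv_r in hd1 by (apply Rgt_not_eq; lra); lra. }
set (lam := M / Wr).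
assert (Hlam0 : 0 < lam) by (unfold lam; apply Rdiv_lt_0_compat; lra).
assert (Hlam1 : lam <= 1) by (unfold lam, Rdiv; rewrite <- (Rinv_r Wr) by (apply Rgt_not_eq; lra);
  apply Rmult_le_compat_r; [left; apply Rinv_0_lt_compat; lra | lra]).
assert (HWl : Wr * lam = M) by (unfold lam; field; lra).
set (mu := M * exp (- lam)).
assert (Hel : / e <= exp (- lam)).
{ unfold e; rewrite <- exp_Ropp. apply exp_le. lra. }
assert (Hmu : M / e <= mu) by (unfold mu, Rdiv; apply Rmult_le_compat_l; lra).
assert (Hdmu : delta * M < M / e).
{ unfold Rdiv. rewrite (Rmult_comm M). apply Rmult_lt_compat_r; lra. }
assert (Hmu0 : 0 < mu) by (assert (0 < M / e) by (apply Rdiv_lt_0_compat; lra); lra).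
set (a := delta * M / mu).
assert (Ha0 : 0 < a) by (unfold a; apply Rdiv_lt_0_compat; [nra| lra]).
assert (Ha1 : a < 1) by (unfold a, Rdiv; rewrite <- (Rinv_r mu) by (apply Rgt_not_eq; lra);
  apply Rmult_lt_compat_r; [apply Rinv_0_lt_compat; lra | lra]).
assert (Hamu : a * mu = delta * M) by (unfold a; field; lra).
assert (Hlna : ln a < 0) by (rewrite <- ln_1; apply ln_increasing; lra).
set (q := exp (delta * M * ln a)).
set (t := lam). set (Eb := exp t - (1 - a) * t).
assert (Hc := hcount a t q (Rlt_le _ _ Ha0) (Rlt_le _ _ Ha1) (Rlt_le _ _ Hlam0)).
assert (Hq : forall n : nat, INR n < delta * INR m -> q <= a ^ n).
{ intros n Hn. unfold q. rewrite <- (exp_ln a Ha0) at 2. rewrite exp_pow.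
  apply exp_le. fold M in Hn. nra. }
specialize (Hc Hq).
set (u := (1 - a) * t * exp (- t)).
assert (Hett : exp t * exp (- t) = 1) by (rewrite <- exp_plus; replace (t + - t) with 0 by ring; apply exp_0).
assert (HEb : Eb = exp t * (1 - u)) by (unfold Eb, u; rewrite Rmult_minus_distr_l, Rmult_1_r;
  replace (exp t * ((1 - a) * t * exp (- t))) with ((1 - a) * t * (exp t * exp (- t))) by ring;
  rewrite Hett; ring).
assert (HEb0 : 0 <= Eb).
{ unfold Eb. assert (H := exp_ineq1_le t). assert (0 <= a * t) by (apply Rmult_le_pos; unfold t; lra). lra. }
assert (Hu : 1 - u <= exp (- u)) by (assert (H := exp_ineq1_le (- u)); lra).
assert (HEbw : Eb ^ w <= exp (M - (1 - a) * mu)).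
{ apply Rle_trans with ((exp t * exp (- u)) ^ w).
  - apply pow_incr. split; [exact HEb0|]. rewrite HEb. apply Rmult_le_compat_l; [left; apply exp_pos| exact Hu].
  - rewrite <- exp_plus, exp_pow. fold Wr. right. f_equal. unfold u, mu, t. rewrite <- HWl at 2. fold t.
    unfold t. rewrite <- HWl. ring. }
set (F := INR (Factorial.fact m)).
set (X := exp (- (1 - a) * mu - delta * M * ln a)).
assert (HqX : q * X = exp (- (1 - a) * mu)) by (unfold q, X; rewrite <- exp_plus; f_equal; ring).
assert (HM0 : 0 < M) by lra.
assert (HMm : 0 < M ^ m) by (apply pow_lt; lra).
assert (HWm : 0 < Wr ^ m) by (apply pow_lt; lra).
assert (Hq0 : 0 < q) by apply exp_pos.
assert (HX0 : 0 < X) by apply exp_pos.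
assert (HF0 : 0 < F) by (unfold F; apply INR_fact_lt_0).
assert (HtW : t ^ m * Wr ^ m = M ^ m) by (rewrite <- Rpow_mult_distr; unfold t; rewrite Rmult_comm, HWl; reflexivity).
set (P := Nc / Wr ^ m).
assert (HP0 : 0 <= P) by (unfold P, Rdiv; apply Rmult_le_pos; [lra| left; apply Rinv_0_lt_compat; lra]).
assert (HPA : P <= F * exp M / M ^ m * X).
{ apply Rmult_le_reg_r with (q * M ^ m); [apply Rmult_lt_0_compat; lra|].
  replace (P * (q * M ^ m)) with (Nc * q * t ^ m) by (unfold P; rewrite <- HtW; field; lra).
  replace (F * exp M / M ^ m * X * (q * M ^ m)) with (F * (exp M * (q * X))) by (field; lra).
  rewrite HqX, <- exp_plus.
  apply Rle_trans with (F * Eb ^ w); [exact Hc|].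
  apply Rmult_le_compat_l; [lra|]. replace (M + - (1 - a) * mu) with (M - (1 - a) * mu) by ring. exact HEbw. }
assert (HA : (F * exp M / M ^ m) ^ 2 <= e ^ 2 * M).
{ assert (S := stirling m hm). fold F M e in S.
  replace (M ^ (2 * m)) with ((M ^ m) ^ 2) in S by (rewrite <- pow_mult; f_equal; lia).
  replace ((F * exp M / M ^ m) ^ 2) with ((F * exp M) ^ 2 / (M ^ m) ^ 2) by (field; lra).
  apply Rmult_le_reg_r with ((M ^ m) ^ 2); [apply pow_lt; lra|].
  replace ((F * exp M) ^ 2 / (M ^ m) ^ 2 * (M ^ m) ^ 2) with ((F * exp M) ^ 2) by (field; lra).
  lra. }
set (c := (1 - e * delta) ^ 2) in *.
assert (Hc0 : 0 < c) by (unfold c; apply pow_lt; lra).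
assert (Hlnab : (a - / a) / 2 <= ln a).
{ assert (Hs := sinh_ge (- ln a) ltac:(lra)).
  rewrite Ropp_involutive, exp_Ropp, exp_ln in Hs by lra. lra. }
assert (Hmuc : c * M / e <= mu * (1 - a) ^ 2).
{ set (d := delta * M) in *. set (nu := M / e) in *.
  assert (Hnu : c * M / e = (nu - d) ^ 2 / nu).
  { unfold c, nu, d. field. lra. }
  assert (Hmua : mu * (1 - a) ^ 2 = (mu - d) ^ 2 / mu).
  { unfold a. fold d. field. lra. }
  rewrite Hnu, Hmua.
  assert (0 < nu) by (unfold nu; apply Rdiv_lt_0_compat; lra).
  assert (0 < d) by (unfold d; nra).
  apply Rmult_le_reg_r with (mu * nu); [nra|].
  replace ((nu - d) ^ 2 / nu * (mu * nu)) with ((nu - d) ^ 2 * mu) by (field; lra).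
  replace ((mu - d) ^ 2 / mu * (mu * nu)) with ((mu - d) ^ 2 * nu) by (field; lra).
  assert (0 <= (mu - nu) * (mu * nu - d * d)) by (apply Rmult_le_pos; nra).
  nra. }
assert (HX : X ^ 2 <= exp (- (c * M / e))).
{ unfold X. rewrite exp_pow. apply exp_le.
  assert (a * mu * ln a >= a * mu * ((a - / a) / 2)) by (apply Rle_ge, Rmult_le_compat_l; [nra| lra]).
  replace (a * mu * ((a - / a) / 2)) with (mu * (a * a - 1) / 2) in H by (field; lra).
  replace (delta * M) with (a * mu) by lra. simpl INR. nra. }
assert (HL : 1 + (beta + / 2) * ln K <= c * M / (2 * e)).
{ apply Rmult_le_reg_l with (2 * e / c); [apply Rdiv_lt_0_compat; lra|].
  replace (2 * e / c * (c * M / (2 * e))) with M by (field; lra). lra. }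
assert (HK : 0 < K) by lra.
set (Rt := Rpower K (- beta)).
assert (HR0 : 0 < Rt) by (unfold Rt, Rpower; apply exp_pos).
assert (HR2 : e ^ 2 * M * exp (- (c * M / e)) <= Rt ^ 2).
{ apply Rle_trans with (e ^ 2 * M * exp (- 2 - (2 * beta + 1) * ln K)).
  - apply Rmult_le_compat_l; [nra|]. apply exp_le. assert (c * M / (2 * e) = (c * M / e) / 2) by (field; lra). lra.
  - replace (e ^ 2 * M * exp (- 2 - (2 * beta + 1) * ln K)) with
      (M * exp (- ln K) * (exp (- beta * ln K)) ^ 2).
    + unfold Rt, Rpower. rewrite exp_Ropp, exp_ln by lra.
      assert (M * / K <= 1) by (apply Rmult_le_reg_r with K; [lra|]; field_simplify; lra).
      assert (0 <= exp (- beta * ln K) ^ 2) by apply pow2_ge_0. nra.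
    + unfold e. rewrite !exp_pow. rewrite Rmult_assoc, <- exp_plus, (Rmult_comm (exp (INR 2 * 1)) M), Rmult_assoc, <- exp_plus. f_equal. f_equal. simpl INR. ring. }
assert (Hfin : P ^ 2 <= Rt ^ 2).
{ apply Rle_trans with ((F * exp M / M ^ m * X) ^ 2).
  - apply pow_incr. split; lra.
  - rewrite Rpow_mult_distr. apply Rle_trans with (e ^ 2 * M * exp (- (c * M / e))); [|exact HR2].
    apply Rmult_le_compat; [apply pow2_ge_0| apply pow2_ge_0| exact HA| exact HX]. }
unfold P in Hfin. fold P. nra.
Qed.

End An.

Module Comb.
Import all_boot all_order all_algebra.
Import Rstruct ring lra.
Import Stdlib.Reals.Reals.
Import Order.TTheory GRing.Theory Num.Theory.
Set Implicit Arguments. Unset Strict Implicit. Unset Printing Implicit Defensive.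
Local Open Scope ring_scope.

Section Comb.
Variables (m W : nat) (j0 : 'I_W) (z t : R).

Definition phi (c : nat) : R := if c == 1%N then z else 1.
Definition pre (D : {set 'I_m}) (f : {ffun 'I_m -> 'I_W}) (j : 'I_W) :=
  [set x in D | f x == j].
Definition FunS (D : {set 'I_m}) (J : {set 'I_W}) :=
  [set f : {ffun 'I_m -> 'I_W} | [forall x, if x \in D then f x \in J else f x == j0]].
Definition NN D J := \sum_(f in FunS D J) \prod_(j in J) phi #|pre D f j|.

Lemma N_split (D : {set 'I_m}) (J : {set 'I_W}) (j : 'I_W) : j \in J ->
  NN D J = \sum_(A in powerset D) phi #|A| * NN (D :\: A) (J :\ j).
Proof.
move=> jJ.
rewrite /NN.
under eq_bigr => f _ do rewrite (bigD1 j) //=.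
rewrite (partition_big (fun f => pre D f j) (mem (powerset D))) /=; last first.
  by move=> f _; rewrite inE; apply/subsetP => x; rewrite inE => /andP[].
apply: eq_bigr => A; rewrite inE => AD.
rewrite mulr_sumr.
pose hA (g : {ffun 'I_m -> 'I_W}) := [ffun x => if x \in A then j else g x].
pose hB (f : {ffun 'I_m -> 'I_W}) := [ffun x => if x \in A then j0 else f x].
rewrite (reindex_onto hA hB); last first.
  move=> f /andP[_ /eqP pf]; apply/ffunP => x; rewrite !ffunE.
  case xA: (x \in A); last by [].
  by move: xA; rewrite -pf inE => /andP[_ /eqP].
apply: eq_big.
- move=> g; apply/idP/idP.
  + case/andP => /andP [hF /eqP hpre] /eqP hBg.
    rewrite inE; apply/forallP => x.
    move: hF; rewrite inE => /forallP /(_ x); rewrite ffunE.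
    have hx : (x \in D) && (hA g x == j) = (x \in A)
      by rewrite -hpre inE.
    rewrite ffunE in hx.
    case xA: (x \in A).
    * have -> : x \in D :\: A = false by rewrite inE xA.
      move=> _; apply/eqP.
      by move/ffunP: hBg => /(_ x); rewrite !ffunE xA.
    * rewrite inE xA /=.
      case xD: (x \in D) => //.
      rewrite xA xD /= in hx.
      by move=> gJ; rewrite in_setD1 gJ hx.
  + rewrite inE => /forallP hg.
    have hgx x : if (x \notin A) && (x \in D) then (g x != j) && (g x \in J) else g x == j0
      by move: (hg x); rewrite in_setD in_setD1.
    apply/andP; split; first (apply/andP; split).
    * rewrite inE; apply/forallP => x; rewrite ffunE.
      move: (hgx x).
      case xA: (x \in A) => /=.
      -- by rewrite (subsetP AD x xA).
      -- by case: (x \in D) => // /andP[].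
    * apply/eqP/setP => x; rewrite !inE ffunE.
      move: (hgx x).
      case xA: (x \in A) => /=.
      -- by rewrite (subsetP AD x xA) eqxx.
      -- case: (x \in D) => //=.
         by case/andP => /negbTE ->.
    * apply/eqP/ffunP => x; rewrite !ffunE.
      case xA: (x \in A) => //.
      move: (hgx x); rewrite xA /=.
      by move/eqP.
- move=> g /andP[/andP [hF /eqP hpre] _].
  rewrite hpre; congr (_ * _).
  rewrite [in RHS](eq_bigl (fun i => (i \in J) && (i != j))); last first.
    by move=> i; rewrite in_setD1 andbC.
  apply: eq_bigr => i /andP[_ ij].
  suff -> : pre D (hA g) i = pre (D :\: A) g i by []; apply/setP => x; rewrite !inE ffunE.
  case xA: (x \in A) => /=.
  + by rewrite (subsetP AD x xA) /= eq_sym (negbTE ij).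
  + by [].
Qed.

Lemma N_base (D : {set 'I_m}) : NN D set0 * t ^+ #|D| <= (#|D|`!)%:R.
Proof.
rewrite /NN.
under eq_bigr => f _ do rewrite big_set0.
rewrite sumr_const.
case: (set_0Vmem D) => [D0 | [x xD]].
  rewrite D0 cards0 expr0 mulr1 fact0.
  have : leq #|FunS set0 set0| 1.
    rewrite -(cards1 ([ffun=> j0] : {ffun 'I_m -> 'I_W})).
    apply: subset_leq_card; apply/subsetP => f; rewrite !inE => /forallP Hf.
    apply/eqP/ffunP => x; rewrite ffunE; move: (Hf x); rewrite inE.
    by move/eqP.
  by rewrite -(ler_nat R).
have -> : FunS D set0 = set0.
  apply/setP => f; rewrite !inE; apply/negbTE; apply/negP => /forallP /(_ x).
  by rewrite xD inE.
by rewrite cards0 mulr0n mul0r ler0n.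
Qed.

Lemma sum_subsets (D : {set 'I_m}) (G : nat -> R) :
  \sum_(A in powerset D) G #|A| = \sum_(c < #|D|.+1) ('C(#|D|, c))%:R * G c.
Proof.
rewrite (partition_big (fun A : {set 'I_m} => (inord #|A| : 'I_#|D|.+1)) predT) //=.
apply: eq_bigr => c _.
rewrite (eq_bigl (fun A => A \in [set A : {set 'I_m} | A \subset D & #|A| == c])); last first.
  move=> A; rewrite !inE; case AD: (A \subset D) => //=.
  rewrite -val_eqE /= inordK //.
  by rewrite ltnS subset_leq_card.
rewrite (eq_bigr (fun _ => G c)); last first.
  by move=> A; rewrite inE => /andP[_ /eqP ->].
by rewrite sumr_const cards_draws mulr_natl.
Qed.

Lemma fact_eq n : Factorial.fact n = n`!.
Proof. by elim: n => //= n IH; rewrite factS IH. Qed.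

Lemma sumf_big (f : nat -> R) d : sum_f_R0 f d = \sum_(c < d.+1) f c.
Proof.
elim: d => [|d IH]; first by rewrite big_ord_recr big_ord0 /= add0r.
by rewrite big_ord_recr /= -IH.
Qed.


Lemma exp_sum d : 0 <= z -> z <= 1 -> 0 <= t ->
  (forall d, (sum_f_R0 (fun i => / INR (Factorial.fact i) * t ^ i) d <= exp t)%R) ->
  (forall x, (1 + x <= exp x)%R) ->
  \sum_(c < d.+1) ('C(d, c))%:R * ((d - c)`!%:R * (phi c * t ^+ c))
    <= d`!%:R * (exp t - (1 - z) * t).
Proof.
move=> z0 z1 t0 expP expL.
have E (c : 'I_d.+1) X : ('C(d, c))%:R * ((d - c)`!%:R * X) = d`!%:R * (X / c`!%:R) :> R.
  have Hc : leq c d by rewrite -ltnS.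
  have nz : c`!%:R != 0 :> R by rewrite pnatr_eq0 -lt0n fact_gt0.
  rewrite -[in RHS](bin_fact Hc) !natrM (mulrC (c`!%:R)) -!mulrA.
  by rewrite (mulrC (c`!%:R)) divfK.
under eq_bigr => c _ do rewrite E.
rewrite -mulr_sumr; apply: ler_wpM2l; first exact: ler0n.
have S : \sum_(c < d.+1) t ^+ c / c`!%:R <= exp t.
  have := expP d; rewrite sumf_big => /RleP; apply: le_trans.
  rewrite le_eqVlt; apply/orP; left; apply/eqP.
  by apply: eq_bigr => c _; rewrite INRE fact_eq RpowE mulrC.
have L := expL t; move/RleP: L; rewrite RplusE R1E => L.
have zt : 0 <= z * t by apply: mulr_ge0.
clear E; case: d S => [|d] S.
  rewrite big_ord_recl big_ord0 /phi /= expr0 fact0 divr1 mul1r addr0.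
  lra.
move: S; rewrite !big_ord_recl /phi /= !expr0 !expr1 fact0 !divr1 !mul1r.
move=> S.
have -> : \sum_(i < d) 1 * t ^+ bump 0 (bump 0 i) / (bump 0 (bump 0 i))`!%:R =
  \sum_(i < d) t ^+ bump 0 (bump 0 i) / (bump 0 (bump 0 i))`!%:R
  by apply: eq_bigr => i _; rewrite mul1r.
lra.
Qed.

Lemma N_bound : 0 <= z -> z <= 1 -> 0 <= t ->
  (forall d, (sum_f_R0 (fun i => / INR (Factorial.fact i) * t ^ i) d <= exp t)%R) ->
  (forall x, (1 + x <= exp x)%R) ->
  forall n (J : {set 'I_W}), #|J| = n -> forall (D : {set 'I_m}),
  NN D J * t ^+ #|D| <= (#|D|`!)%:R * (exp t - (1 - z) * t) ^+ n.
Proof.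
move=> z0 z1 t0 expP expL.
set Eb := exp t - (1 - z) * t.
have Eb0 : 0 <= Eb.
  have L := expL t; move/RleP: L; rewrite RplusE R1E => L.
  have zt : 0 <= z * t by apply: mulr_ge0.
  rewrite /Eb; lra.
have phi0 c : 0 <= phi c by rewrite /phi; case: (c == 1%N) => //; exact: ler01.
elim=> [|n IH] J hJ D.
  by rewrite (cards0_eq hJ) expr0 mulr1; exact: N_base.
have /card_gt0P [j jJ] : leq 1 #|J| by rewrite hJ.
have hJ' : #|J :\ j| = n by move: hJ; rewrite (cardsD1 j J) jJ add1n => [[]].
rewrite (N_split D jJ) mulr_suml.
apply: (@le_trans _ _ (\sum_(A in powerset D) (phi #|A| * t ^+ #|A|) * ((#|D| - #|A|)`!%:R * Eb ^+ n))).
  apply: ler_sum => A; rewrite inE => AD.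
  have cD : #|D| = addn #|A| #|D :\: A| by rewrite (cardsDS AD) subnKC // subset_leq_card.
  rewrite {1}cD exprD mulrACA.
  apply: ler_wpM2l; first by apply: mulr_ge0 => //; apply: exprn_ge0.
  by have := IH _ hJ' (D :\: A); rewrite cardsDS.
rewrite (sum_subsets D (fun c => phi c * t ^+ c * ((#|D| - c)`!%:R * Eb ^+ n))).
rewrite (eq_bigr (fun c : 'I_#|D|.+1 => ('C(#|D|, c))%:R * ((#|D| - c)`!%:R * (phi c * t ^+ c)) * Eb ^+ n)); last first.
  by move=> c _; rewrite -!mulrA; congr (_ * _); rewrite [RHS]mulrCA; congr (_ * _); rewrite mulrCA.
rewrite -mulr_suml exprS mulrA.
apply: ler_wpM2r; first exact: exprn_ge0.
exact: exp_sum.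
Qed.

End Comb.
Lemma prod_phi (m w : nat) (z : R) (f : outcome m w) :
  \prod_(j in [set: 'I_w]) phi z #|pre [set: 'I_m] f j| = z ^+ singletons f.
Proof.
rewrite /singletons /phi.
rewrite (eq_bigr (fun j => if #|[set i : 'I_m | f i == j]| == S O then z else 1)); last first.
  move=> j _; suff -> : pre [set: 'I_m] f j = [set i : 'I_m | f i == j] by [].
  by apply/setP => x; rewrite !inE.
rewrite -big_mkcondr prodr_const /=.
congr (z ^+ _); by apply: eq_card => j; rewrite !inE unfold_in /= inE.
Qed.

Lemma count_bound (m w : nat) (hw : leq 1 w) (delta z t q : R)
  (z0 : (0 <= z)%R) (z1 : (z <= 1)%R) (t0 : (0 <= t)%R)
  (expP : forall d, (sum_f_R0 (fun i => / INR (Factorial.fact i) * t ^ i) d <= exp t)%R)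
  (expL : forall x, (1 + x <= exp x)%R)
  (hq : forall n : nat, (INR n < delta * INR m)%R -> (q <= z ^ n)%R) :
  (INR #|[set f : outcome m w | few_singletons delta f]| * q * t ^ m
     <= INR (Factorial.fact m) * (exp t - (1 - z) * t) ^ w)%R.
Proof.
have z0' : 0 <= z by apply/RleP.
have z1' : z <= 1 by apply/RleP.
have t0' : 0 <= t by apply/RleP.
have key := @N_bound m w (Ordinal hw) z t z0' z1' t0' expP expL w [set: 'I_w]
   ltac:(by rewrite cardsT card_ord) [set: 'I_m].
rewrite cardsT card_ord in key.
have FT : FunS (Ordinal hw) [set: 'I_m] [set: 'I_w] = [set: outcome m w].
  by apply/setP => f; rewrite !inE; apply/forallP => x; rewrite !inE.
rewrite /NN FT in key.
rewrite (eq_bigr (fun f => z ^+ singletons f)) in key; last by move=> f _; rewrite prod_phi.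
apply/RleP; rewrite !INRE !RpowE fact_eq.
apply: le_trans key; apply: ler_wpM2r; first exact: exprn_ge0.
rewrite (bigID (fun f => few_singletons delta f)) /=.
apply: (@le_trans _ _ (\sum_(i in [set: outcome m w] | few_singletons delta i) z ^+ singletons i)); last first.
  by rewrite lerDl; apply: sumr_ge0 => f _; exact: exprn_ge0.
rewrite RmultE -sum1_card natr_sum mulr_suml.
rewrite [X in X <= _](eq_bigl (fun f => (f \in [set: outcome m w]) && few_singletons delta f)); last by move=> f; rewrite !inE.
apply: ler_sum => f /andP[_ hf].
rewrite mul1r.
have := hq (singletons f); rewrite RpowE => H; apply/RleP; apply: H.
move: hf; rewrite /few_singletons; by case: Rlt_dec.
Qed.

Lemma card_all m w : INR #|[set: outcome m w]| = (INR w ^ m)%R.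
Proof. by rewrite cardsT card_ffun !card_ord INRE natrX RpowE INRE. Qed.

End Comb.

From mathcomp Require Import all_boot.
From Stdlib Require Import Reals.

Theorem mainTheorem2 (delta beta : R) (k m w : nat)
  (hd0 : (0 < delta)%R) (hd1 : (delta < / exp 1)%R) (hb : (0 < beta)%R)
  (hk : (0 < k)%N) (hm : (0 < m)%N) (hw : (0 < w)%N)
  (hmw : (m <= w)%N) (hmk : (m <= k)%N)
  (hlow : (2 * exp 1 / (1 - exp 1 * delta) ^ 2
             * (1 + (beta + / 2) * ln (INR k)) <= INR m)%R) :
  (prob_few_singletons m w delta <= Rpower (INR k) (- beta))%R.
Proof.
unfold prob_few_singletons. rewrite Comb.card_all.
apply (An.final delta beta k m w); try assumption.
- exact (elimT leP hm).
- exact (elimT leP hmw).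
- exact (elimT leP hmk).
- apply pos_INR.
- intros z t q z0 z1 t0 hq. apply Comb.count_bound; try assumption.
  + intros d. apply An.exp_partial. exact t0.
  + exact exp_ineq1_le.
Qed.
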